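(* For every integer $r\ge 0$: \begin{align*} \mathrm{LCD}[6r+3,2] &\ge 4r+2,\\ \mathrm{LCD}[6r+4,2] &\ge 4r+2,\\ \mathrm{LCD}[6r+5,2] &\ge 4r+2,\\ \mathrm{LCD}[6r+6,2] &\ge 4r+3,\\ \mathrm{LCD}[6r+7,2] &\ge 4r+4,\\ \mathrm{LCD}[6r+8,2] &\ge 4r+5. \end{align*}
   Context: All codes are binary linear codes, i.e. subspaces of $\mathbb{F}_2^n$; an $[n,k,d]$ code is one of length $n$, dimension $k$ and minimum Hamming distance $d$. A linear code $C$ is an LCD code if $C\cap C^\perp=\{0\}$, where $C^\perp$ is the dual with respect to the standard dot product. For positive integers $n\ge k$, $\mathrm{LCD}[n,k]$ denotes the largest $d$ such that there exists a binary $[n,k,d]$ LCD code. *)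

(* Defs.v *)
From HB Require Import structures.
From mathcomp Require Import all_boot all_order all_algebra.
Set Implicit Arguments. Unset Strict Implicit. Unset Printing Implicit Defensive.
Import GRing.Theory.
Local Open Scope ring_scope.

Notation word n := 'rV['F_2]_n.

Definition wt n (x : word n) : nat := #|[set i : 'I_n | x 0 i != 0]|.

Definition dot n (x y : word n) : 'F_2 := \sum_(i < n) x 0 i * y 0 i.

(* C is an F_2-linear subspace (over F_2, closure under + and 0 suffice). *)
Definition is_linear n (C : {set word n}) : bool :=
  (0 \in C) && [forall x in C, [forall y in C, x + y \in C]].

Definition dual n (C : {set word n}) : {set word n} :=
  [set y | [forall x in C, dot x y == 0]].

(* Binary linear [n,k] code: subspace of dimension k, i.e. with 2^k elements. *)
Definition is_code n k (C : {set word n}) : bool :=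
  is_linear C && (#|C| == 2 ^ k)%N.

Definition is_LCD_code n k (C : {set word n}) : bool :=
  is_code k C && (C :&: dual C == [set 0]).

(* Minimum distance = minimum weight of a nonzero codeword (linear code);
   default n for the zero code (irrelevant for k >= 1). *)
Definition min_dist n (C : {set word n}) : nat :=
  \big[minn/n]_(x in C | x != 0) wt x.

(* LCD[n,k]: the largest d such that a binary [n,k,d] LCD code exists
   (0 if no such code exists). *)
Definition LCD (n k : nat) : nat :=
  \max_(C : {set word n} | is_LCD_code k C) min_dist C.

(* Main.v *)
Require Import Defs.
From mathcomp Require Import all_boot all_order all_algebra zify.
Set Implicit Arguments. Unset Strict Implicit. Unset Printing Implicit Defensive.
Import GRing.Theory.
Local Open Scope ring_scope.

Definition vec n (P : nat -> bool) : word n := \row_(i < n) ((P i)%:R : 'F_2).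

Lemma F2_nat m : (m%:R : 'F_2) = (odd m)%:R.
Proof. by rewrite -(@Fp_nat_mod 2) // modn2. Qed.

Lemma F2_add (p q : bool) : ((p%:R : 'F_2) + q%:R) = (p (+) q)%:R.
Proof. by case: p; case: q; rewrite ?addr0 ?add0r //= -natrD F2_nat. Qed.

Lemma F2_mul (p q : bool) : ((p%:R : 'F_2) * q%:R) = (p && q)%:R.
Proof. by case: p; case: q; rewrite ?mulr0 ?mul0r ?mulr1. Qed.

Lemma F2_eq0 (p : bool) : (((p%:R : 'F_2)) == 0) = ~~ p.
Proof. by case: p. Qed.

Lemma vecD n P Q : vec n P + vec n Q = vec n (fun i => P i (+) Q i).
Proof. by apply/rowP => i; rewrite !mxE F2_add. Qed.

Lemma sum_count (P : nat -> bool) s : (\sum_(i <- s) (P i : nat))%N = count P s.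
Proof. by elim: s => [|a s IH]; rewrite ?big_nil ?big_cons ?IH. Qed.

Lemma sum_ord_count n (P : nat -> bool) : (\sum_(i < n) (P i : nat))%N = count P (iota 0 n).
Proof. by rewrite -(big_mkord xpredT (fun i => (P i : nat))) /index_iota subn0 sum_count. Qed.

Lemma wt_vec n P : wt (vec n P) = count P (iota 0 n).
Proof.
rewrite /wt -sum1_card -sum_ord_count big_mkcond /=.
by apply: eq_bigr => i _; rewrite in_set mxE F2_eq0 negbK; case: (P i).
Qed.

Lemma dot_vec n P Q : dot (vec n P) (vec n Q) = (odd (count (fun i => P i && Q i) (iota 0 n)))%:R.
Proof.
rewrite /dot -F2_nat -sum_ord_count natr_sum.
by apply: eq_bigr => i _; rewrite !mxE F2_mul.
Qed.

Lemma count_block (P : nat -> bool) m k (c : bool) :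
  (forall i, (m <= i < m + k)%N -> P i = c) -> count P (iota m k) = (c * k)%N.
Proof.
move=> H; rewrite (@eq_in_count _ _ (fun _ => c)); last first.
  by move=> i; rewrite mem_iota => /H.
by clear H; case: c => /=; rewrite ?count_predT ?count_pred0 ?size_iota ?mul1n.
Qed.

Lemma addvv n (v : word n) : v + v = 0.
Proof. by apply/rowP => i; rewrite !mxE (addrr_pchar2 (@pchar_Fp 2 isT)). Qed.

Lemma count4 (P : nat -> bool) x y z w (cx cy cz cw : bool) :
  (forall i, (0 <= i < 0 + x)%N -> P i = cx) ->
  (forall i, (x <= i < x + y)%N -> P i = cy) ->
  (forall i, (x + y <= i < x + y + z)%N -> P i = cz) ->
  (forall i, (x + y + z <= i < x + y + z + w)%N -> P i = cw) ->
  count P (iota 0 (x + y + z + w)) = (cx * x + cy * y + cz * z + cw * w)%N.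
Proof.
move=> H1 H2 H3 H4.
rewrite !iotaD !count_cat !add0n (count_block H1) (count_block H2).
by rewrite (count_block H3) (count_block H4).
Qed.

Definition Pa x y z i := ((i < x) || ((x + y <= i) && (i < x + y + z)))%N.
Definition Pb x y z i := ((x <= i) && (i < x + y + z))%N.
Ltac blk := move=> ? ?; unfold Pa, Pb; simpl; lia.
Ltac cnt b1 b2 b3 b4 := rewrite (@count4 _ _ _ _ _ b1 b2 b3 b4); [ | blk | blk | blk | blk].

Lemma wt0 n : wt (0 : word n) = 0%N.
Proof.
rewrite /wt; apply/eqP; rewrite cards_eq0; apply/eqP/setP => i.
by rewrite !inE mxE eqxx.
Qed.

Lemma dot0 n (u : word n) : dot u 0 = 0.
Proof. by rewrite /dot big1 // => i _; rewrite mxE mulr0. Qed.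

Lemma main x y z w d : (0 < d)%N -> (d <= x + y)%N -> (d <= x + z)%N -> (d <= y + z)%N ->
  odd (x + z) || odd z -> odd z || odd (y + z) -> odd x || odd y ->
  (d <= LCD (x + y + z + w) 2)%N.
Proof.
move=> d0 dxy dxz dyz h1 h2 h3.
set n := (x + y + z + w)%N.
pose a := vec n (Pa x y z). pose b := vec n (Pb x y z).
have ab : a + b = vec n (fun i => Pa x y z i (+) Pb x y z i) by rewrite vecD.
have wa : wt a = (x + z)%N by rewrite wt_vec /n; cnt true false true false; rewrite /=; lia.
have wb : wt b = (y + z)%N by rewrite wt_vec /n; cnt false true true false; rewrite /=; lia.
have wab : wt (a + b) = (x + y)%N by rewrite ab wt_vec /n; cnt true true false false; rewrite /=; lia.
have daa : dot a a = (odd (x + z))%:R by rewrite dot_vec /n; cnt true false true false; congr (_ %:R); congr odd; rewrite /=; lia.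
have dba : dot b a = (odd z)%:R by rewrite dot_vec /n; cnt false false true false; congr (_ %:R); congr odd; rewrite /=; lia.
have dab : dot a b = (odd z)%:R by rewrite dot_vec /n; cnt false false true false; congr (_ %:R); congr odd; rewrite /=; lia.
have dbb : dot b b = (odd (y + z))%:R by rewrite dot_vec /n; cnt false true true false; congr (_ %:R); congr odd; rewrite /=; lia.
have daab : dot a (a + b) = (odd x)%:R by rewrite ab dot_vec /n; cnt true false false false; congr (_ %:R); congr odd; rewrite /=; lia.
have dbab : dot b (a + b) = (odd y)%:R by rewrite ab dot_vec /n; cnt false true false false; congr (_ %:R); congr odd; rewrite /=; lia.
pose C : {set word n} := [set 0; a; b; a + b].
have ne0 u : (0 < wt u)%N -> u != 0 by move=> hu; apply/eqP => e; rewrite e wt0 in hu.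
have a0 : a != 0 by apply: ne0; lia.
have b0 : b != 0 by apply: ne0; lia.
have ab0 : a + b != 0 by apply: ne0; lia.
have aneb : a != b by apply: contra ab0 => /eqP ->; rewrite addvv.
have anab : a != a + b.
  apply: contra b0 => /eqP e; apply/eqP.
  have -> : b = a + (a + b) by rewrite addrA addvv add0r.
  by rewrite -e addvv.
have bnab : b != a + b.
  apply: contra a0 => /eqP e; apply/eqP.
  have -> : a = a + b + b by rewrite -addrA addvv addr0.
  by rewrite -e addvv.
have cardC : #|C| = 4%N.
  have -> : C = a + b |: (b |: (a |: [set 0])).
    apply/setP => v; rewrite !inE.
    by case: (v == 0); case: (v == a); case: (v == b); case: (v == a + b).
  rewrite !cardsU1 cards1 !inE.
  by rewrite (eq_sym (a + b) b) (eq_sym (a + b) a) (eq_sym b a) (negbTE bnab) (negbTE anab) (negbTE ab0) (negbTE aneb) (negbTE b0) a0.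
have memC v : v \in C -> [\/ v = 0, v = a, v = b | v = a + b].
  rewrite !inE => /orP[/orP[/orP[]|]|]/eqP->.
  - by constructor 1.
  - by constructor 2.
  - by constructor 3.
  - by constructor 4.
have linC : is_linear C.
  rewrite /is_linear !inE eqxx /=.
  apply/forallP => u; apply/implyP => /memC[]->;
  apply/forallP => v; apply/implyP => /memC[]->; rewrite !inE;
  rewrite ?add0r ?addr0 ?addvv ?eqxx ?orbT //.
  - by rewrite addrA addvv add0r eqxx ?orbT.
  - by rewrite addrC eqxx ?orbT.
  - by rewrite addrCA addvv addr0 eqxx ?orbT.
  - by rewrite addrAC addvv add0r eqxx ?orbT.
  - by rewrite -addrA addvv addr0 eqxx ?orbT.
have lcd : is_LCD_code 2 C.
  rewrite /is_LCD_code /is_code linC cardC /=.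
  apply/eqP/setP => v; rewrite !inE.
  case: (eqVneq v 0) => [->|vn0].
    rewrite /=; apply/forallP => u; apply/implyP => _; by rewrite dot0.
  apply/negbTE; apply/negP => /andP[hv /forallP H].
  have aC : a \in C by rewrite !inE eqxx /= ?orbT.
  have bC : b \in C by rewrite !inE eqxx /= ?orbT.
  have Ha := implyP (H a) aC; have Hb := implyP (H b) bC.
  move: hv; rewrite /= => /orP[/orP[]|]/eqP e; subst v.
  - by move: Ha Hb h1; rewrite daa dba !F2_eq0; case: (odd _); case: (odd _).
  - by move: Ha Hb h2; rewrite dab dbb !F2_eq0; case: (odd _); case: (odd _).
  - by move: Ha Hb h3; rewrite daab dbab !F2_eq0; case: (odd _); case: (odd _).
apply: (leq_trans _ (leq_bigmax_cond _ lcd)).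
rewrite /min_dist; apply: (big_ind (fun m => d <= m)%N).
- rewrite /n; lia.
- by move=> p q hp hq; rewrite leq_min hp hq.
move=> v /andP[] /memC[]-> //; rewrite ?wa ?wb ?wab //.
by rewrite eqxx.
Qed.

Ltac inst n x y z w :=
    rewrite (_ : n = (x + y + z + w)%N); [ | lia];
    apply: main; [lia | lia | lia | lia | | | ];
    rewrite ?oddD ?oddM /=; case: (odd _).

Theorem proposition2p2 (r : nat) :
  (4 * r + 2 <= LCD (6 * r + 3) 2)%N /\
  (4 * r + 2 <= LCD (6 * r + 4) 2)%N /\
  (4 * r + 2 <= LCD (6 * r + 5) 2)%N /\
  (4 * r + 3 <= LCD (6 * r + 6) 2)%N /\
  (4 * r + 4 <= LCD (6 * r + 7) 2)%N /\
  (4 * r + 5 <= LCD (6 * r + 8) 2)%N.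
Proof.
split; first by inst (6*r+3)%N (2*r+1)%N (2*r+1)%N (2*r+1)%N 0%N.
split; first by inst (6*r+4)%N (2*r+1)%N (2*r+1)%N (2*r+1)%N 1%N.
split; first by inst (6*r+5)%N (2*r+1)%N (2*r+1)%N (2*r+1)%N 2%N.
split; first by inst (6*r+6)%N (2*r+1)%N (2*r+2)%N (2*r+3)%N 0%N.
split; first by inst (6*r+7)%N (2*r+1)%N (2*r+3)%N (2*r+3)%N 0%N.
by inst (6*r+8)%N (2*r+2)%N (2*r+3)%N (2*r+3)%N 0%N.
Qed.
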